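(* Suppose $\mathbf A$ is irreducible. Then for all $s\ge0$, $\phi^s$ is quasimultiplicative on $\mathbf S$.
   Context: $\mathbf A=\{A_i\}_{i\in\mathcal I}\subset\mathrm{SL}(3,\mathbb R)$ with $\mathcal I$ finite or countable, generating the semigroup $\mathbf S$; $A_u=A_{i_1}\cdots A_{i_m}$ for a finite word $u$, $\mathcal I^*$ the set of finite words. $\mathbf A$ is irreducible if no proper nonzero linear subspace of $\mathbb R^3$ is invariant under every $A_i$. For singular values $\alpha_1\ge\alpha_2\ge\alpha_3$ of $A$ and $s\ge0$: $\phi^s(A)=(\alpha_2/\alpha_1)^s$ if $0\le s\le1$; $\frac{\alpha_2}{\alpha_1}(\frac{\alpha_3}{\alpha_1})^{s-1}$ if $1\le s\le2$; $(\frac{\alpha_2\alpha_3}{\alpha_1^2})^s$ if $s\ge2$. A function $\phi:\mathbf S\to\mathbb R_{>0}$ is quasimultiplicative on $\mathbf S$ if there exist a finite $\Gamma\subset\mathcal I^*$ and $c>0$ such that for all $u,w\in\mathcal I^*$ there is $k\in\Gamma$ with $\phi(A_{ukw})\ge c\,\phi(A_u)\phi(A_w)$. *)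

(* Defs.v *)
From HB Require Import structures.
From mathcomp Require Import all_boot all_order all_algebra.
From mathcomp Require Import all_classical all_reals all_analysis.
Set Implicit Arguments. Unset Strict Implicit. Unset Printing Implicit Defensive.
Import Order.TTheory GRing.Theory Num.Theory.
Local Open Scope ring_scope.
Local Open Scope classical_set_scope.

Section Defs.
Variable R : realType.

Definition word_mx (I : Type) (A : I -> 'M[R]_3) (u : seq I) : 'M[R]_3 :=
  foldr (fun i M => A i *m M) 1%:M u.

(* Irreducibility: no proper nonzero subspace W of R^3 (column vectors) with
   A_i W <= W for all i.  W is the row space of V; A_i W <= W in column
   convention is (V *m (A_i)^T <= V)%MS, i.e. stablemx V (A i)^T. *)
Definition irreducible (I : Type) (A : I -> 'M[R]_3) : Prop :=
  forall V : 'M[R]_3, (0 < \rank V < 3)%N -> ~ (forall i, stablemx V (A i)^T).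

Definition orthogonal3 (U : 'M[R]_3) : Prop := U *m U^T = 1%:M.

Definition is_singular_values (A : 'M[R]_3) (a : R * R * R) : Prop :=
  let: (a1, a2, a3) := a in
  [/\ a2 <= a1, a3 <= a2, 0 <= a3 &
   exists U V : 'M[R]_3, [/\ orthogonal3 U, orthogonal3 V &
     A = U *m diag_mx (\row_(i < 3) [:: a1; a2; a3]`_i) *m V]].

(* The singular values (well defined since the SVD exists and the ordered
   singular values are unique). *)
Definition singvals (A : 'M[R]_3) : R * R * R :=
  xget (0, 0, 0) [set a | is_singular_values A a].

Definition phi (s : R) (A : 'M[R]_3) : R :=
  let: (a1, a2, a3) := singvals A in
  if s <= 1 then (a2 / a1) `^ s
  else if s <= 2 then (a2 / a1) * (a3 / a1) `^ (s - 1)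
  else (a2 * a3 / a1 ^+ 2) `^ s.

Definition quasimultiplicative (I : eqType) (A : I -> 'M[R]_3)
    (f : 'M[R]_3 -> R) : Prop :=
  exists (Gamma : seq (seq I)) (c : R), 0 < c /\
    forall u w : seq I, exists2 k, k \in Gamma &
      c * f (word_mx A u) * f (word_mx A w) <= f (word_mx A (u ++ k ++ w)).

End Defs.

(* Main.v *)
Require Import Defs.
From HB Require Import structures.
From mathcomp Require Import all_boot all_order all_algebra.
From mathcomp Require Import all_classical all_reals all_analysis.
From mathcomp Require Import ring lra.
Import Order.TTheory GRing.Theory Num.Theory.
Local Open Scope ring_scope.
Set Implicit Arguments. Unset Strict Implicit. Unset Printing Implicit Defensive.
Import numFieldNormedType.Exports.

Section S.
Variable R : realType.
Definition i0 : 'I_3 := @Ordinal 3 0 isT.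
Definition i1 : 'I_3 := @Ordinal 3 1 isT.
Definition i2 : 'I_3 := @Ordinal 3 2 isT.
Lemma sum3 (F : 'I_3 -> R) : \sum_(i < 3) F i = F i0 + F i1 + F i2.
Proof.
rewrite !big_ord_recr big_ord0 /= add0r.
by congr (F _ + F _ + F _); apply: val_inj.
Qed.
Lemma ord3P (i : 'I_3) : [\/ i = i0, i = i1 | i = i2].
Proof.
case: i => [[|[|[|//]]] ?]; [constructor 1|constructor 2|constructor 3]; exact: val_inj.
Qed.
Definition dot n (x y : 'rV[R]_n) := \sum_i x 0 i * y 0 i.
Definition qf n (x : 'rV[R]_n) := dot x x.
Lemma dotC n (x y : 'rV[R]_n) : dot x y = dot y x.
Proof. by apply: eq_bigr => i _; rewrite mulrC. Qed.
Lemma dotE n (x y : 'rV[R]_n) : dot x y = (x *m y^T) 0 0.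
Proof. by rewrite mxE; apply: eq_bigr => i _; rewrite mxE. Qed.
Lemma qf_ge0 n (x : 'rV[R]_n) : 0 <= qf x.
Proof. by apply: sumr_ge0 => i _; rewrite -expr2 sqr_ge0. Qed.
Lemma qf_eq0 n (x : 'rV[R]_n) : (qf x == 0) = (x == 0).
Proof.
rewrite /qf /dot psumr_eq0; last by move=> i _; rewrite -expr2 sqr_ge0.
apply/allP/eqP => [H|->]; last by move=> i _ /=; rewrite mxE mulr0.
apply/rowP => i; rewrite mxE; have := H i (mem_index_enum _).
by rewrite /= mulf_eq0 orbb => /eqP.
Qed.
Lemma dotDZ (a b c : 'rV[R]_3) t : dot (a + t *: b) c = dot a c + t * dot b c.
Proof. rewrite /dot !sum3 !mxE; ring. Qed.
Lemma qfDZ (a b : 'rV[R]_3) t : qf (a + t *: b) = qf a + 2 * t * dot a b + t ^+ 2 * qf b.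
Proof. rewrite /qf /dot !sum3 !mxE; ring. Qed.
Lemma qfZ n (a : 'rV[R]_n) t : qf (t *: a) = t ^+ 2 * qf a.
Proof. rewrite /qf /dot mulr_sumr; apply: eq_bigr => i _; rewrite !mxE; ring. Qed.
End S.

Section S2.
Variable R : realType.
Local Open Scope classical_set_scope.

Lemma cont_mul (T : topologicalType) (f g : T -> R) :
  continuous f -> continuous g -> continuous (fun x => f x * g x).
Proof. by move=> cf cg x; apply: continuousM; [exact: cf|exact: cg]. Qed.

Lemma cont_add (T : topologicalType) (f g : T -> R) :
  continuous f -> continuous g -> continuous (fun x => f x + g x).
Proof. by move=> cf cg x; apply: continuousD; [exact: cf|exact: cg]. Qed.

Lemma cont_sum (T : topologicalType) m (F : 'I_m -> T -> R) :
  (forall i, continuous (F i)) -> continuous (fun x => \sum_(i < m) F i x).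
Proof.
move=> cF; elim: m F cF => [|m IH] F cF.
  by under eq_fun do rewrite big_ord0; exact: cst_continuous.
under eq_fun do rewrite big_ord_recr /=.
apply: cont_add; last exact: cF.
exact: (IH (fun i => F (widen_ord (leqnSn m) i))).
Qed.

Definition ecnt (T : topologicalType) m p (F : T -> 'M[R]_(m, p)) :=
  forall i j, continuous (fun x => F x i j).

Lemma ecnt_mul (T : topologicalType) m p r (F : T -> 'M[R]_(m, p)) (G : T -> 'M[R]_(p, r)) :
  ecnt F -> ecnt G -> ecnt (fun x => F x *m G x).
Proof.
move=> cF cG i j; under eq_fun do rewrite mxE.
by apply: cont_sum => k; apply: cont_mul.
Qed.

Lemma ecnt_cst (T : topologicalType) m p (M : 'M[R]_(m, p)) : ecnt (fun _ : T => M).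
Proof. by move=> i j; exact: cst_continuous. Qed.

Lemma ecnt_id n : ecnt (fun x : 'rV[R]_n => x).
Proof. by move=> i j; exact: coord_continuous. Qed.

Lemma cont_qf (T : topologicalType) n (F : T -> 'rV[R]_n) : ecnt F -> continuous (fun x => qf (F x)).
Proof. by move=> cF; apply: cont_sum => i; apply: cont_mul. Qed.

Definition box n : set 'rV[R]_n := [set v : 'rV[R]_n | forall i : 'I_n, (`[-1, 1]%classic : set R) (v ord0 i)].

Lemma box_compact n : compact (@box n).
Proof.
have H := @rV_compact R n (fun=> `[-1, 1]%classic) (fun=> @segment_compact R (-1) 1).
exact: H. Qed.

Lemma EVT_rV n (K : set 'rV[R]_n) (f : 'rV[R]_n -> R) :
  K !=set0 -> closed K -> K `<=` @box n -> continuous f ->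
  exists2 c, K c & forall t, K t -> f t <= f c.
Proof.
move=> K0 cK Kb cf.
have cpK : compact K by exact: subclosed_compact cK (@box_compact n) Kb.
have [c cK' H] := compact_EVT_max K0 cpK (continuous_subspaceT cf).
exists c; first by rewrite inE in cK'.
by move=> t Kt; apply: H; rewrite inE.
Qed.

Lemma closed_preim (T : topologicalType) (f : T -> R) (a : R) :
  continuous f -> closed [set x | f x = a].
Proof.
move=> cf; have -> : [set x | f x = a] = f @^-1` [set y | y = a] by [].
apply: preimage_closed; last exact: closed_eq.
by move=> x _; exact: cf.
Qed.

Lemma open_preim (T : topologicalType) (f : T -> R) (a : R) :
  continuous f -> open [set x | a < f x].
Proof.
move=> cf; have -> : [set x | a < f x] = f @^-1` [set y | a < y] by [].
apply: open_comp; last exact: open_gt.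
by move=> x _; exact: cf.
Qed.
End S2.

Section S3.
Variable R : realType.
Local Open Scope classical_set_scope.
Implicit Types (x y v w : 'rV[R]_3) (N : 'M[R]_3).

Lemma dotZ x y a : dot (a *: x) y = a * dot x y.
Proof. rewrite /dot !sum3 !mxE; ring. Qed.

Lemma mulDZ x y t N : (x + t *: y) *m N = x *m N + t *: (y *m N).
Proof. by rewrite mulmxDl scalemxAl. Qed.

Lemma qf_normalize x : 0 < qf x -> qf ((Num.sqrt (qf x))^-1 *: x) = 1.
Proof.
move=> q0; rewrite qfZ exprVn sqr_sqrtr ?ltW // mulVf //; exact: lt0r_neq0.
Qed.

Lemma lagr_core N v w :
  qf v = 1 -> dot v w = 0 ->
  (forall t, qf ((v + t *: w) *m N) <= qf (v *m N) * qf (v + t *: w)) ->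
  dot (v *m N) (w *m N) = 0.
Proof.
move=> qv dvw H.
set a := qf (v *m N); set b := dot (v *m N) (w *m N); set c := qf (w *m N); set d := qf w.
have H1 t : 2 * t * b <= t ^+ 2 * (a * d - c).
  have := H t; rewrite mulDZ !qfDZ qv dvw; rewrite -/a -/b -/c -/d => h; nra.
apply/eqP; apply: contraT => bn0.
set K := a * d - c; set e := `|K| + 1.
have e0 : 0 < e by rewrite /e ltr_pwDr ?normr_ge0.
have := H1 (b / e); set u := b / e => hu.
have ue : b = u * e by rewrite /u mulfVK // lt0r_neq0.
have un0 : u != 0 by apply: contra bn0; rewrite ue => /eqP ->; rewrite mul0r.
have u0 : 0 < u ^+ 2 by rewrite lt_def sqrf_eq0 un0 sqr_ge0.
have Ke : K - 2 * e < 0.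
  have := ler_norm K; have := normr_ge0 K; rewrite /e; lra.
rewrite ue in hu.
have hh : u ^+ 2 * (K - 2 * e) < 0 by rewrite pmulr_rlt0.
move: hu hh; rewrite /K /e; nra.
Qed.
End S3.

Section S3b.
Variable R : realType.
Local Open Scope classical_set_scope.
Implicit Types (x y v w : 'rV[R]_3) (N : 'M[R]_3).

Lemma max_lagr N (K : set 'rV[R]_3) v w : qf v = 1 -> dot v w = 0 ->
  (forall t, K ((Num.sqrt (qf (v + t *: w)))^-1 *: (v + t *: w))) ->
  (forall y, K y -> qf (y *m N) <= qf (v *m N)) -> dot (v *m N) (w *m N) = 0.
Proof.
move=> qv dvw HK Hmax; apply: lagr_core => // t.
set x := v + t *: w.
have qx : 0 < qf x.
  rewrite /x qfDZ qv dvw; have := qf_ge0 w; have := sqr_ge0 t; nra.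
have := Hmax _ (HK t); rewrite -scalemxAl qfZ exprVn sqr_sqrtr ?(ltW qx) // => h.
have -> : qf (x *m N) = ((qf x)^-1 * qf (x *m N)) * qf x.
  by rewrite mulrAC mulVf ?mul1r // lt0r_neq0.
by apply: ler_wpM2r => //; exact: ltW.
Qed.

Definition cross x y : 'rV[R]_3 :=
  \row_(i < 3) [:: x 0 i1 * y 0 i2 - x 0 i2 * y 0 i1;
                  x 0 i2 * y 0 i0 - x 0 i0 * y 0 i2;
                  x 0 i0 * y 0 i1 - x 0 i1 * y 0 i0]`_i.

Ltac ex3 := rewrite /qf /dot ?sum3 !mxE /=.

Lemma cross_dotl x y : dot (cross x y) x = 0.
Proof. rewrite /cross; ex3; ring. Qed.
Lemma cross_dotr x y : dot (cross x y) y = 0.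
Proof. rewrite /cross; ex3; ring. Qed.
Lemma cross_qf x y : qf (cross x y) = qf x * qf y - dot x y ^+ 2.
Proof. rewrite /cross; ex3; ring. Qed.

Lemma qf_coord x i : x 0 i ^+ 2 <= qf x.
Proof.
rewrite /qf /dot sum3.
have h0 := sqr_ge0 (x 0 i0); have h1 := sqr_ge0 (x 0 i1); have h2 := sqr_ge0 (x 0 i2).
by case: (ord3P i) => ->; rewrite !expr2 in h0 h1 h2 *; lra.
Qed.

Lemma unit_in_box x : qf x = 1 -> box x.
Proof.
move=> qx i /=; rewrite in_itv /=; have := qf_coord x i; rewrite qx => h.
by apply/andP; split; nra.
Qed.

Lemma exists_perp v : qf v = 1 -> exists w, qf w = 1 /\ dot w v = 0.
Proof.
move=> qv.
pose p1 : 'rV[R]_3 := \row_(i < 3) [:: - v 0 i1; v 0 i0; 0]`_i.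
pose p2 : 'rV[R]_3 := \row_(i < 3) [:: 0; - v 0 i2; v 0 i1]`_i.
pose p3 : 'rV[R]_3 := \row_(i < 3) [:: v 0 i2; 0; - v 0 i0]`_i.
have hs : qf p1 + qf p2 + qf p3 = 2 * qf v by rewrite /p1 /p2 /p3; ex3; ring.
have d1 : dot p1 v = 0 by rewrite /p1; ex3; ring.
have d2 : dot p2 v = 0 by rewrite /p2; ex3; ring.
have d3 : dot p3 v = 0 by rewrite /p3; ex3; ring.
suff [p [pp dp]] : exists p, 0 < qf p /\ dot p v = 0.
  exists ((Num.sqrt (qf p))^-1 *: p); split; first exact: qf_normalize.
  by rewrite dotZ dp mulr0.
have g1 := qf_ge0 p1; have g2 := qf_ge0 p2; have g3 := qf_ge0 p3.
case: (ltrP 0 (qf p1)) => h1; first by exists p1.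
case: (ltrP 0 (qf p2)) => h2; first by exists p2.
case: (ltrP 0 (qf p3)) => h3; first by exists p3.
exfalso; move: hs; rewrite qv; lra.
Qed.
End S3b.

Section S3c.
Variable R : realType.
Local Open Scope classical_set_scope.
Implicit Types (x y v w : 'rV[R]_3) (N : 'M[R]_3).

Lemma cont_dot n (y : 'rV[R]_n) : continuous (fun x : 'rV[R]_n => dot x y).
Proof. by apply: cont_sum => i; apply: cont_mul; [exact: coord_continuous| exact: cst_continuous]. Qed.

Lemma cont_F N : continuous (fun x : 'rV[R]_3 => qf (x *m N)).
Proof. by apply: cont_qf; apply: ecnt_mul; [exact: ecnt_id | exact: ecnt_cst]. Qed.

Lemma qf_pos_comb v w t : qf v = 1 -> dot v w = 0 -> 0 < qf (v + t *: w).
Proof. move=> qv dvw; rewrite qfDZ qv dvw; have := qf_ge0 w; have := sqr_ge0 t; nra. Qed.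

Lemma spectral N : exists v1 v2 v3 : 'rV[R]_3,
  [/\ qf v1 = 1, qf v2 = 1, qf v3 = 1 &
   [/\ dot v1 v2 = 0, dot v1 v3 = 0, dot v2 v3 = 0 &
   [/\ dot (v1 *m N) (v2 *m N) = 0, dot (v1 *m N) (v3 *m N) = 0,
       dot (v2 *m N) (v3 *m N) = 0,
       qf (v2 *m N) <= qf (v1 *m N) & qf (v3 *m N) <= qf (v2 *m N)]]].
Proof.
pose K1 := [set x : 'rV[R]_3 | qf x = 1].
have K1b : K1 `<=` @box R 3 by move=> x; exact: unit_in_box.
have K1c : closed K1 by apply: closed_preim; apply: cont_qf; exact: ecnt_id.
have K10 : K1 !=set0.
  exists (\row_(i < 3) [:: 1; 0; 0]`_i); rewrite /K1 /= /qf /dot sum3 !mxE /=; ring.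
have [v1 K1v1 max1] := EVT_rV K10 K1c K1b (@cont_F N).
have qv1 : qf v1 = 1 by [].
pose K2 := K1 `&` [set x | dot x v1 = 0].
have K2b : K2 `<=` @box R 3 by move=> x [] /K1b.
have K2c : closed K2 by apply: closedI => //; exact: closed_preim (@cont_dot 3 v1).
have K20 : K2 !=set0 by have [w [qw dw]] := exists_perp qv1; exists w.
have [v2 [qv2 d21] max2] := EVT_rV K20 K2c K2b (@cont_F N).
pose v3 := cross v1 v2.
have d12 : dot v1 v2 = 0 by rewrite dotC.
have d31 : dot v3 v1 = 0 by exact: cross_dotl.
have d32 : dot v3 v2 = 0 by exact: cross_dotr.
have qv3 : qf v3 = 1 by rewrite /v3 cross_qf qv1 qv2 d12; ring.
have d13 : dot v1 v3 = 0 by rewrite dotC.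
have d23 : dot v2 v3 = 0 by rewrite dotC.
exists v1, v2, v3; split => //; split => //; split.
- apply: (max_lagr (K := K1)) => // t.
  by rewrite /K1 /=; apply: qf_normalize; apply: qf_pos_comb.
- apply: (max_lagr (K := K1)) => // t.
  by rewrite /K1 /=; apply: qf_normalize; apply: qf_pos_comb.
- apply: (max_lagr (K := K2)) => // t; split; first by apply: qf_normalize; apply: qf_pos_comb.
  by rewrite /= dotZ dotDZ d21 d31 mulr0 addr0 mulr0.
- by apply: max1.
- by apply: max2; split.
Qed.
End S3c.

Section S4.
Variable R : realType.
Implicit Types (x y v w : 'rV[R]_3) (M N : 'M[R]_3).

Lemma i01 : (i0 == i1) = false. Proof. by []. Qed.
Lemma i02 : (i0 == i2) = false. Proof. by []. Qed.
Lemma i12 : (i1 == i2) = false. Proof. by []. Qed.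
Lemma i10 : (i1 == i0) = false. Proof. by []. Qed.
Lemma i20 : (i2 == i0) = false. Proof. by []. Qed.
Lemma i21 : (i2 == i1) = false. Proof. by []. Qed.

Lemma qfN_pos M v : M \in unitmx -> qf v = 1 -> 0 < qf (v *m M^T).
Proof.
move=> uM qv; rewrite lt_def qf_ge0 andbT qf_eq0; apply/eqP => h.
have : v = 0.
  by rewrite -(mulmxK (x := M^T) _ v) ?unitmx_tr // h mul0mx.
by move=> v0; move: qv; rewrite v0 /qf /dot big1 => [/esym/eqP|i _]; rewrite ?oner_eq0 // mxE mul0r.
Qed.

Lemma svd_exists M : M \in unitmx -> exists a, is_singular_values M a.
Proof.
move=> uM; set N := M^T.
have [v1 [v2 [v3 [q1 q2 q3 [d12 d13 d23 [e12 e13 e23 o21 o32]]]]]] := spectral N.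
pose vs (j : 'I_3) := nth 0 [:: v1; v2; v3] j.
pose s (j : 'I_3) := Num.sqrt (qf (vs j *m N)).
have vsq j : qf (vs j) = 1 by case: (ord3P j) => ->.
have Fpos j : 0 < qf (vs j *m N) by apply: qfN_pos.
have s0 j : 0 < s j by rewrite sqrtr_gt0.
have sn0 j : s j != 0 by rewrite lt0r_neq0.
have s2 j : s j ^+ 2 = qf (vs j *m N) by rewrite sqr_sqrtr // ltW.
have dvs j k : dot (vs j) (vs k) = (j == k)%:R.
  case: (ord3P j) => ->; case: (ord3P k) => ->;
  rewrite ?eqxx ?i01 ?i02 ?i12 ?i10 ?i20 ?i21 /=;
  first [exact: q1 | exact: q2 | exact: q3 | exact: d12 | exact: d13 | exact: d23
        | by rewrite dotC].
have dNvs j k : dot (vs j *m N) (vs k *m N) = (j == k)%:R * s j ^+ 2.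
  case: (eqVneq j k) => [<-|jk]; first by rewrite s2 mul1r.
  rewrite mul0r.
  case: (ord3P j) jk => ->; case: (ord3P k) => -> //=; rewrite ?eqxx //= => _;
  first [exact: e12 | exact: e13 | exact: e23 | by rewrite dotC].
pose V := \matrix_(j < 3, l < 3) vs j 0 l.
pose U := \matrix_(i < 3, j < 3) ((vs j *m N) 0 i / s j).
pose d := \row_(i < 3) [:: s i0; s i1; s i2]`_i.
have dE j : d 0 j = s j by rewrite mxE; case: (ord3P j) => ->.
have VVt : V *m V^T = 1%:M.
  apply/matrixP => j k; rewrite [LHS]mxE [RHS]mxE -dvs.
  by apply: eq_bigr => l _; rewrite !mxE.
have UtU : U^T *m U = 1%:M.
  apply/matrixP => j k; rewrite [LHS]mxE [RHS]mxE.
  transitivity (dot (vs j *m N) (vs k *m N) / (s j * s k)).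
    rewrite /dot mulr_suml; apply: eq_bigr => i _; rewrite !mxE invfM; ring.
  rewrite dNvs; case: (eqVneq j k) => [<-|_]; last by rewrite !mul0r.
  by rewrite mul1r -expr2 divff // expf_neq0.
have MVt : M *m V^T = U *m diag_mx d.
  apply/matrixP => i j; rewrite mul_mx_diag !mxE.
  rewrite (_ : [:: s i0; s i1; s i2]`_j = s j); last by case: (ord3P j) => ->.
  rewrite mulfVK //.
  by apply: eq_bigr => l _; rewrite !mxE mulrC.
exists (s i0, s i1, s i2); rewrite /is_singular_values /=; split.
- by rewrite /s ler_sqrt ?(ltW (Fpos _)).
- by rewrite /s ler_sqrt ?(ltW (Fpos _)).
- exact: sqrtr_ge0.
exists U, V; split.
- by rewrite /orthogonal3; apply: mulmx1C.
- exact: VVt.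
have VtV : V^T *m V = 1%:M by apply: mulmx1C.
rewrite -[M]mulmx1 -VtV mulmxA MVt.
by congr (_ *m _ *m _); apply/rowP => i; rewrite /d !mxE.
Qed.
End S4.

Section S5.
Variable R : realType.
Implicit Types (x y v w : 'rV[R]_3) (M N P Q W : 'M[R]_3).

Lemma qf_orth x W : W *m W^T = 1%:M -> qf (x *m W) = qf x.
Proof. by move=> h; rewrite /qf !dotE trmx_mul mulmxA -(mulmxA x) h mulmx1. Qed.

Lemma prod3 (F : 'I_3 -> R) : \prod_(i < 3) F i = F i0 * F i1 * F i2.
Proof.
rewrite !big_ord_recr big_ord0 /= mul1r.
by congr (F _ * F _ * F _); apply: val_inj.
Qed.

Definition e1 : 'rV[R]_3 := \row_(i < 3) [:: 1; 0; 0]`_i.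
Definition e3 : 'rV[R]_3 := \row_(i < 3) [:: 0; 0; 1]`_i.

Lemma sv_bounds M a1 a2 a3 : is_singular_values M (a1, a2, a3) ->
  [/\ forall x, a3 ^+ 2 * qf x <= qf (x *m M^T) /\ qf (x *m M^T) <= a1 ^+ 2 * qf x,
      exists x, qf x = 1 /\ qf (x *m M^T) = a1 ^+ 2,
      exists x, qf x = 1 /\ qf (x *m M^T) = a3 ^+ 2 &
      (\det M) ^+ 2 = (a1 * a2 * a3) ^+ 2].
Proof.
case=> h21 h32 h3 [U [V [oU oV ->]]].
set d := \row_(i < 3) [:: a1; a2; a3]`_i.
have oUt : U^T *m U^T^T = 1%:M by rewrite trmxK; apply: mulmx1C.
have oVt : V^T *m V^T^T = 1%:M by rewrite trmxK; apply: mulmx1C.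
have key x : qf (x *m (U *m diag_mx d *m V)^T) = qf (x *m V^T *m diag_mx d).
  by rewrite !trmx_mul tr_diag_mx !mulmxA qf_orth.
have qD y : qf (y *m diag_mx d) = y 0 i0 ^+ 2 * a1 ^+ 2 + y 0 i1 ^+ 2 * a2 ^+ 2 + y 0 i2 ^+ 2 * a3 ^+ 2.
  by rewrite mul_mx_diag /qf /dot sum3 !mxE /=; ring.
have qy y : qf y = y 0 i0 ^+ 2 + y 0 i1 ^+ 2 + y 0 i2 ^+ 2.
  by rewrite /qf /dot sum3; ring.
have p21 : a2 ^+ 2 <= a1 ^+ 2 by rewrite ler_sqr // ?nnegrE; lra.
have p32 : a3 ^+ 2 <= a2 ^+ 2 by rewrite ler_sqr // ?nnegrE; lra.
have hVV y : (y *m V) *m V^T = y by rewrite -mulmxA oV mulmx1.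
split.
- move=> x; rewrite key qD -(qf_orth x oVt) qy.
  set y0 := (x *m V^T) 0 i0; set y1 := (x *m V^T) 0 i1; set y2 := (x *m V^T) 0 i2.
  have g0 := sqr_ge0 y0; have g1 := sqr_ge0 y1; have g2 := sqr_ge0 y2.
  have := sqr_ge0 a3.
  split; nra.
- exists (e1 *m V); rewrite key hVV qD qf_orth // qy /e1 !mxE /=; split; ring.
- exists (e3 *m V); rewrite key hVV qD qf_orth // qy /e3 !mxE /=; split; ring.
have dU : \det U ^+ 2 = 1 by rewrite expr2 -{2}det_tr -det_mulmx oU det1.
have dV : \det V ^+ 2 = 1 by rewrite expr2 -{2}det_tr -det_mulmx oV det1.
rewrite !det_mulmx det_diag prod3 /d !mxE /= !exprMn dU dV; ring.
Qed.
End S5.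

Section S6.
Variable R : realType.
Implicit Types (x y v w : 'rV[R]_3) (M N P Q W : 'M[R]_3).

Definition topv M := (singvals M).1.1.
Definition midv M := (singvals M).1.2.
Definition botv M := (singvals M).2.

Lemma sv_spec M : M \in unitmx -> is_singular_values M (singvals M).
Proof. by move=> uM; rewrite /singvals; apply: xgetPex; exact: svd_exists. Qed.

Lemma det1_unit M : \det M = 1 -> M \in unitmx.
Proof. by move=> h; rewrite unitmxE h unitr1. Qed.

Lemma sv_det1 M : \det M = 1 ->
  [/\ 0 < botv M, botv M <= midv M, midv M <= topv M, topv M * midv M * botv M = 1 &
   [/\ forall x, botv M ^+ 2 * qf x <= qf (x *m M^T) /\ qf (x *m M^T) <= topv M ^+ 2 * qf x,
       exists x, qf x = 1 /\ qf (x *m M^T) = topv M ^+ 2 &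
       exists x, qf x = 1 /\ qf (x *m M^T) = botv M ^+ 2]].
Proof.
move=> dM; have := sv_spec (det1_unit dM); rewrite /topv /midv /botv.
case: (singvals M) => [[a1 a2] a3] /= H.
have [hb h1 h3 hd] := sv_bounds H.
case: H => h21 h32 h3' _.
rewrite dM expr1n in hd.
have p1 : a1 * a2 * a3 = 1.
  have p0 : 0 <= a1 * a2 * a3 by rewrite !mulr_ge0 //; lra.
  nra.
have a30 : 0 < a3.
  rewrite lt_def h3' andbT; apply/eqP => a30; move: p1; rewrite a30 mulr0 => /eqP.
  by rewrite eq_sym oner_eq0.
by split.
Qed.

Lemma det_mul1 P Q : \det P = 1 -> \det Q = 1 -> \det (P *m Q) = 1.
Proof. by move=> hP hQ; rewrite det_mulmx hP hQ mulr1. Qed.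

Lemma sq_le (a b : R) : 0 <= a -> 0 <= b -> a ^+ 2 <= b ^+ 2 -> a <= b.
Proof. move=> ha hb h; nra. Qed.

Lemma top_ge0 M : \det M = 1 -> 0 <= topv M.
Proof. by move=> h; have [b0 bm mt _ _] := sv_det1 h; lra. Qed.

Lemma top_gt0 M : \det M = 1 -> 0 < topv M.
Proof. by move=> h; have [b0 bm mt _ _] := sv_det1 h; lra. Qed.

Lemma top_mul P Q : \det P = 1 -> \det Q = 1 -> topv (P *m Q) <= topv P * topv Q.
Proof.
move=> hP hQ; have hPQ := det_mul1 hP hQ.
have [_ _ _ _ [_ [x [qx ex]] _]] := sv_det1 hPQ.
have [_ _ _ _ [bP _ _]] := sv_det1 hP.
have [_ _ _ _ [bQ _ _]] := sv_det1 hQ.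
apply: sq_le; [exact: top_ge0| by rewrite mulr_ge0 // top_ge0|].
rewrite -ex trmx_mul mulmxA.
have [_ h1] := bP (x *m Q^T); have [_ h2] := bQ x.
rewrite qx mulr1 in h2.
apply: (le_trans h1); rewrite exprMn; apply: ler_wpM2l => //.
exact: sqr_ge0.
Qed.

Lemma top_inv M : \det M = 1 -> topv (invmx M) = (botv M)^-1.
Proof.
move=> hM; have uM := det1_unit hM.
have hN : \det (invmx M) = 1 by rewrite det_inv hM invr1.
have [b0 _ _ _ [bM _ [x3 [q3 e3]]]] := sv_det1 hM.
have [_ _ _ _ [bN [x1 [q1 e1']] _]] := sv_det1 hN.
have tN0 := top_ge0 hN.
have A y : qf (y *m (invmx M)^T) * botv M ^+ 2 <= qf y.
  have [h _] := bM (y *m (invmx M)^T).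
  rewrite -mulmxA -trmx_mul mulmxV // trmx1 mulmx1 in h.
  by rewrite mulrC.
have B : topv (invmx M) ^+ 2 * botv M ^+ 2 <= 1.
  by rewrite -e1' -q1; exact: A.
have C : 1 <= topv (invmx M) ^+ 2 * botv M ^+ 2.
  set y := x3 *m M^T.
  have [_ h] := bN y.
  rewrite /y -mulmxA -trmx_mul mulVmx // trmx1 mulmx1 q3 e3 in h.
  exact: h.
have E : topv (invmx M) * botv M = 1.
  have p0 : 0 <= topv (invmx M) * botv M by rewrite mulr_ge0 // ltW.
  rewrite -exprMn in B C; nra.
by apply: (mulIf (lt0r_neq0 b0)); rewrite E mulVf // lt0r_neq0.
Qed.

Definition Gm M := \sum_(i < 3) \sum_(j < 3) M i j ^+ 2.

Lemma cs3 (a0 a1 a2 b0 b1 b2 : R) :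
  (a0 * b0 + a1 * b1 + a2 * b2) ^+ 2 <= (a0 ^+ 2 + a1 ^+ 2 + a2 ^+ 2) * (b0 ^+ 2 + b1 ^+ 2 + b2 ^+ 2).
Proof.
have -> : (a0 ^+ 2 + a1 ^+ 2 + a2 ^+ 2) * (b0 ^+ 2 + b1 ^+ 2 + b2 ^+ 2) =
  (a0 * b0 + a1 * b1 + a2 * b2) ^+ 2 + ((a0 * b1 - a1 * b0) ^+ 2 + (a0 * b2 - a2 * b0) ^+ 2 + (a1 * b2 - a2 * b1) ^+ 2) by ring.
by rewrite lerDl !addr_ge0 // sqr_ge0.
Qed.

Lemma qf_le_Gm M x : qf (x *m M^T) <= Gm M * qf x.
Proof.
rewrite /Gm /qf /dot !sum3 !mxE !sum3 !mxE.
have := cs3 (M i0 i0) (M i0 i1) (M i0 i2) (x 0 i0) (x 0 i1) (x 0 i2).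
have := cs3 (M i1 i0) (M i1 i1) (M i1 i2) (x 0 i0) (x 0 i1) (x 0 i2).
have := cs3 (M i2 i0) (M i2 i1) (M i2 i2) (x 0 i0) (x 0 i1) (x 0 i2).
rewrite !expr2; nra.
Qed.

Lemma Gm_ge M : \det M = 1 -> topv M ^+ 2 <= Gm M.
Proof.
move=> hM; have [_ _ _ _ [_ [x [qx ex]] _]] := sv_det1 hM.
by rewrite -ex -[Gm M]mulr1 -qx; apply: qf_le_Gm.
Qed.

Lemma Gm_le M : \det M = 1 -> Gm M <= 3%:R * topv M ^+ 2.
Proof.
move=> hM; have [_ _ _ _ [bM _ _]] := sv_det1 hM.
have [_ h1] := bM (\row_(i < 3) [:: 1; 0; 0]`_i).
have [_ h2] := bM (\row_(i < 3) [:: 0; 1; 0]`_i).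
have [_ h3] := bM (\row_(i < 3) [:: 0; 0; 1]`_i).
move: h1 h2 h3; rewrite /Gm /qf /dot !sum3 !mxE !sum3 !mxE /=.
rewrite !expr2; nra.
Qed.

Lemma Gm_ge0 M : 0 <= Gm M.
Proof. by apply: sumr_ge0 => i _; apply: sumr_ge0 => j _; exact: sqr_ge0. Qed.

Lemma GmZ M a : Gm (a *: M) = a ^+ 2 * Gm M.
Proof.
rewrite /Gm mulr_sumr; apply: eq_bigr => i _; rewrite mulr_sumr; apply: eq_bigr => j _.
by rewrite mxE exprMn.
Qed.

Lemma Gm_eq0 M : (Gm M == 0) = (M == 0).
Proof.
apply/idP/eqP => [h|->]; last first.
  by rewrite /Gm big1 // => i _; rewrite big1 // => j _; rewrite mxE expr0n.
apply/matrixP => i j; rewrite mxE.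
move: h; rewrite /Gm psumr_eq0; last by move=> k _; apply: sumr_ge0 => l _; exact: sqr_ge0.
move=> /allP /(_ i (mem_index_enum _)) /=.
rewrite psumr_eq0; last by move=> l _; exact: sqr_ge0.
by move=> /allP /(_ j (mem_index_enum _)) /=; rewrite sqrf_eq0 => /eqP.
Qed.
End S6.

Section S7.
Variable R : realType.
Implicit Types (x y v w : 'rV[R]_3) (M N P Q W : 'M[R]_3).

Lemma Wp_comb (Wp : 'rV[R]_3 -> Prop) : Wp 0 ->
  (forall a x y, Wp x -> Wp y -> Wp (a *: x + y)) ->
  forall m (D : 'rV[R]_m) (X : 'M[R]_(m, 3)), (forall j, Wp (row j X)) -> Wp (D *m X).
Proof.
move=> H0 HC m D X HX; rewrite mulmx_sum_row.
by elim/big_rec: _ => // j acc _ h; apply: HC.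
Qed.

Lemma sub_of_pred (Wp : 'rV[R]_3 -> Prop) : Wp 0 ->
  (forall a x y, Wp x -> Wp y -> Wp (a *: x + y)) ->
  exists V : 'M[R]_3, forall y, Wp y <-> (y <= V)%MS.
Proof.
move=> H0 HC.
pose Pn n := `[< exists V : 'M[R]_3, (forall i, Wp (row i V)) /\ \rank V = n >].
have exP : exists n, Pn n.
  exists 0%N; apply/asboolP; exists 0; split; last exact: mxrank0.
  by move=> i; rewrite row0.
have ubP : forall n, Pn n -> (n <= 3)%N.
  by move=> n /asboolP [V [_ <-]]; exact: rank_leq_row.
case: (ex_maxnP exP ubP) => m /asboolP [V [HV rV]] maxm.
exists V => y; split => [Wy|]; last first.
  by case/submxP => D ->; apply: (Wp_comb H0 HC) => i; apply/HV; exact: row_sub.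
apply: contraPP (Wy) => /negP nyV _.
pose V' := (V + y)%MS.
have HV' : forall i, Wp (row i V').
  move=> i; have : (row i V' <= col_mx V y)%MS.
    by rewrite -(addsmxE V y); exact: row_sub.
  case/submxP => D ->.
  rewrite -[D]hsubmxK mul_row_col -[lsubmx D *m V]scale1r.
  apply: (HC); first exact: (Wp_comb H0 HC).
  apply: (Wp_comb H0 HC) => j; rewrite (_ : row j y = y) //.
  by apply/rowP => k; rewrite !mxE (ord1 j).
have : (m < \rank V')%N.
  rewrite -rV; apply: rank_ltmx; rewrite ltmxE addsmxSl /=.
  by apply: contra nyV => h; exact: submx_trans (addsmxSr V y) h.
have : (\rank V' <= m)%N by apply: maxm; apply/asboolP; exists V'.
by move=> h1 h2; move: (leq_trans h2 h1); rewrite ltnn.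
Qed.

Lemma stable_inv (V B : 'M[R]_3) : (V *m B <= V)%MS -> B \in unitmx -> (V *m invmx B <= V)%MS.
Proof.
move=> h uB.
have r : \rank (V *m B) = \rank V by rewrite mxrankMfree // row_free_unit.
have := (mxrank_leqif_eq h).2; rewrite r eqxx => /esym /andP [_ h2].
by have := submxMr (invmx B) h2; rewrite mulmxK.
Qed.

Lemma irr_triv (I : Type) (A : I -> 'M[R]_3) : irreducible A -> (forall i, A i \in unitmx) ->
  forall (Wp : 'rV[R]_3 -> Prop), Wp 0 ->
  (forall a x y, Wp x -> Wp y -> Wp (a *: x + y)) ->
  (forall i y, Wp y -> Wp (y *m (invmx (A i))^T)) ->
  (forall y, Wp y) \/ (forall y, Wp y -> y = 0).
Proof.
move=> hirr hu Wp H0 HC Hinv.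
have [V HV] := sub_of_pred H0 HC.
have st : forall i, stablemx V (A i)^T.
  move=> i; set C := (invmx (A i))^T.
  have sC : (V *m C <= V)%MS.
    apply/row_subP => j; rewrite row_mul; apply/HV; apply: Hinv; apply/HV; exact: row_sub.
  have uC : C \in unitmx by rewrite /C unitmx_tr unitmx_inv.
  have := stable_inv sC uC.
  by rewrite /C trmx_inv invmxK.
have := hirr V; case: (ltnP 0 (\rank V)) => r0.
  case: (ltnP (\rank V) 3) => r3; first by move=> /(_ isT) /(_ st).
  move=> _; left => y; apply/HV; apply: submx_full.
  by rewrite /row_full eqn_leq rank_leq_col r3.
move=> _; right => y /HV; move: r0; rewrite leqn0 mxrank_eq0 => /eqP ->.
by rewrite submx0 => /eqP.
Qed.
End S7.

Section S8.
Variable R : realType.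
Implicit Types (x y v w : 'rV[R]_3) (M N P Q W : 'M[R]_3).

Lemma word_nil (I : Type) (A : I -> 'M[R]_3) : word_mx A [::] = 1%:M.
Proof. by []. Qed.

Lemma word_cat (I : Type) (A : I -> 'M[R]_3) (u v : seq I) :
  word_mx A (u ++ v) = word_mx A u *m word_mx A v.
Proof.
elim: u => [|i u IH]; first by rewrite /= mul1mx.
by rewrite /word_mx /= -/(word_mx A (u ++ v)) -/(word_mx A u) IH mulmxA.
Qed.

Lemma word_cons (I : Type) (A : I -> 'M[R]_3) i u :
  word_mx A (i :: u) = A i *m word_mx A u.
Proof. by []. Qed.

Lemma word_one (I : Type) (A : I -> 'M[R]_3) i : word_mx A [:: i] = A i.
Proof. by rewrite word_cons word_nil mulmx1. Qed.

Lemma word_det (I : Type) (A : I -> 'M[R]_3) : (forall i, \det (A i) = 1) ->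
  forall u, \det (word_mx A u) = 1.
Proof.
move=> h; elim=> [|i u IH]; first by rewrite word_nil det1.
by rewrite word_cons det_mulmx h IH mulr1.
Qed.

Lemma invmx_mul M N : M \in unitmx -> N \in unitmx -> invmx (M *m N) = invmx N *m invmx M.
Proof.
move=> uM uN; have uMN : M *m N \in unitmx by rewrite unitmx_mul uM uN.
have h : (M *m N) *m (invmx N *m invmx M) = 1%:M.
  by rewrite mulmxA -(mulmxA M) mulmxV // mulmx1 mulmxV.
by rewrite -[invmx (M *m N)]mulmx1 -h mulmxA mulVmx // mul1mx.
Qed.

Lemma word_inv (I : Type) (A : I -> 'M[R]_3) : (forall i, \det (A i) = 1) ->
  forall u, invmx (word_mx A u) = word_mx (fun i => invmx (A i)) (rev u).
Proof.
move=> h; elim=> [|i u IH]; first by rewrite word_nil /= invmx1.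
rewrite word_cons invmx_mul ?det1_unit ?word_det // IH rev_cons -cats1 word_cat.
by rewrite word_one.
Qed.

Lemma nondeg (I : Type) (A : I -> 'M[R]_3) : (forall i, \det (A i) = 1) -> irreducible A ->
  forall P Q, P != 0 -> Q != 0 ->
  exists k, P *m word_mx (fun i => invmx (A i)) k *m Q != 0.
Proof.
move=> hdet hirr P Q P0 Q0; set C := fun i => invmx (A i).
case: (pselect (exists k, P *m word_mx C k *m Q != 0)) => // Hn; exfalso.
have H k : P *m word_mx C k *m Q = 0.
  by apply/eqP; apply/negPn/negP => hk; apply: Hn; exists k.
pose Wp y := forall k, y *m (P *m word_mx C k)^T = 0.
have H0 : Wp 0 by move=> k; rewrite mul0mx.
have HC : forall a x y, Wp x -> Wp y -> Wp (a *: x + y).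
  by move=> a x y hx hy k; rewrite mulmxDl -scalemxAl hx hy scaler0 addr0.
have Hinv : forall i y, Wp y -> Wp (y *m (invmx (A i))^T).
  move=> i y hy k; rewrite -mulmxA -trmx_mul -mulmxA.
  by rewrite -/(C i) -(word_one C i) -word_cat hy.
have hu i : A i \in unitmx by apply: det1_unit.
case: (irr_triv hirr hu H0 HC Hinv) => [Hall|Hz].
  move/eqP: P0; apply; apply/matrixP => i j.
  have := congr1 (fun m : 'M[R]_(1,3) => m 0 i) (Hall (delta_mx 0 j) [::]).
  by rewrite word_nil mulmx1 -rowE !mxE.
move/eqP: Q0; apply; apply/matrixP => i j.
have hj : (col j Q)^T = 0.
  apply: Hz => k; rewrite -trmx_mul colE mulmxA H mul0mx trmx0 //.
have := congr1 (fun m : 'M[R]_(1,3) => m 0 i) hj; by rewrite !mxE.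
Qed.
End S8.

Section S9.
Variable R : realType.
Local Open Scope classical_set_scope.
Implicit Types (M P Q : 'M[R]_3).

Definition PP (x : 'rV[R]_(3 * 3 + 3 * 3)) : 'M[R]_3 := vec_mx (lsubmx x).
Definition QQ (x : 'rV[R]_(3 * 3 + 3 * 3)) : 'M[R]_3 := vec_mx (rsubmx x).

Lemma ecnt_PP : ecnt PP.
Proof. by move=> i j; rewrite /PP; under eq_fun do rewrite !mxE; exact: coord_continuous. Qed.
Lemma ecnt_QQ : ecnt QQ.
Proof. by move=> i j; rewrite /QQ; under eq_fun do rewrite !mxE; exact: coord_continuous. Qed.

Lemma cont_Gm (T : topologicalType) (F : T -> 'M[R]_3) : ecnt F -> continuous (fun x => Gm (F x)).
Proof.
move=> cF; apply: cont_sum => i; apply: cont_sum => j.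
by under eq_fun do rewrite expr2; apply: cont_mul.
Qed.

Lemma le_sum1 n (F : 'I_n -> R) j : (forall i, 0 <= F i) -> F j <= \sum_i F i.
Proof. by move=> h; rewrite (bigD1 j) //= lerDl; apply: sumr_ge0 => i _; exact: h. Qed.

Lemma entry_le_Gm M i j : M i j ^+ 2 <= Gm M.
Proof.
have h1 : M i j ^+ 2 <= \sum_(j < 3) M i j ^+ 2.
  exact: (le_sum1 (F := fun j => M i j ^+ 2) j (fun _ => sqr_ge0 _)).
have h2 : \sum_(j < 3) M i j ^+ 2 <= Gm M.
  apply: (le_sum1 (F := fun i => \sum_(j < 3) M i j ^+ 2) i) => k.
  by apply: sumr_ge0 => l _; exact: sqr_ge0.
exact: le_trans h1 h2.
Qed.

Lemma K_box x : Gm (PP x) = 1 -> Gm (QQ x) = 1 -> @box R _ x.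
Proof.
move=> hp hq l /=; rewrite in_itv /=.
suff : x 0 l ^+ 2 <= 1 by move=> h; apply/andP; split; nra.
case: (splitP l) => k hk.
  have -> : l = lshift _ k by apply: val_inj.
  have -> : x 0 (lshift _ k) = lsubmx x 0 k by rewrite mxE.
  case/mxvec_indexP: k hk => a b _.
  by rewrite -hp (_ : lsubmx x 0 _ = PP x a b) ?entry_le_Gm // /PP !mxE.
have -> : l = rshift _ k by apply: val_inj.
have -> : x 0 (rshift _ k) = rsubmx x 0 k by rewrite mxE.
case/mxvec_indexP: k hk => a b _.
by rewrite -hq (_ : rsubmx x 0 _ = QQ x a b) ?entry_le_Gm // /QQ !mxE.
Qed.

Lemma feng (I : choiceType) (Dw : seq I -> 'M[R]_3) :
  (forall P Q, P != 0 -> Q != 0 -> exists k, P *m Dw k *m Q != 0) ->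
  exists (G : seq (seq I)) (c : R), 0 < c /\ forall P Q, P != 0 -> Q != 0 ->
   exists2 k, k \in G & c * Gm P * Gm Q <= Gm (P *m Dw k *m Q).
Proof.
move=> hnd.
pose K : set 'rV[R]_(3 * 3 + 3 * 3) := [set x | Gm (PP x) = 1] `&` [set x | Gm (QQ x) = 1].
have cK : compact K.
  apply: (subclosed_compact _ (@box_compact R _)).
    apply: closedI; apply: closed_preim; apply: cont_Gm; [exact: ecnt_PP | exact: ecnt_QQ].
  by move=> x [hp hq]; exact: K_box.
pose fam (p : (seq I * nat)%type) : set 'rV[R]_(3 * 3 + 3 * 3) :=
  [set x | (p.2.+1%:R)^-1 < Gm (PP x *m Dw p.1 *m QQ x)].
have ofam p : open (fam p).
  apply: open_preim; apply: cont_Gm; apply: ecnt_mul; last exact: ecnt_QQ.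
  by apply: ecnt_mul; [exact: ecnt_PP|exact: ecnt_cst].
have Kcov : K `<=` cover setT fam.
  move=> x [hp hq].
  have P0 : PP x != 0 by rewrite -Gm_eq0 hp oner_eq0.
  have Q0 : QQ x != 0 by rewrite -Gm_eq0 hq oner_eq0.
  have [k hk] := hnd _ _ P0 Q0.
  have g0 : 0 < Gm (PP x *m Dw k *m QQ x) by rewrite lt_def Gm_eq0 hk Gm_ge0.
  exists (k, Num.trunc ((Gm (PP x *m Dw k *m QQ x))^-1)) => //.
  by rewrite /fam /= invf_plt ?posrE ?ltr0n //; exact: truncnS_gt.
have := cK; rewrite compact_cover => /(_ _ setT fam (fun p _ => ofam p) Kcov) [D' _ HD'].
pose Nm := (\max_(p <- finmap.enum_fset D') p.2)%N.
exists [seq p.1 | p <- finmap.enum_fset D'], (Nm.+1%:R)^-1; split; first by rewrite invr_gt0 ltr0n.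
move=> P Q P0 Q0.
have gP : 0 < Gm P by rewrite lt_def Gm_eq0 P0 Gm_ge0.
have gQ : 0 < Gm Q by rewrite lt_def Gm_eq0 Q0 Gm_ge0.
set a := (Num.sqrt (Gm P))^-1; set b := (Num.sqrt (Gm Q))^-1.
have ha : a ^+ 2 * Gm P = 1 by rewrite /a exprVn sqr_sqrtr ?ltW // mulVf // lt0r_neq0.
have hb : b ^+ 2 * Gm Q = 1 by rewrite /b exprVn sqr_sqrtr ?ltW // mulVf // lt0r_neq0.
pose x : 'rV[R]_(3 * 3 + 3 * 3) := row_mx (mxvec (a *: P)) (mxvec (b *: Q)).
have px : PP x = a *: P by rewrite /PP row_mxKl mxvecK.
have qx : QQ x = b *: Q by rewrite /QQ row_mxKr mxvecK.
have Kx : K x by split; rewrite /= ?px ?qx GmZ.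
have [p pD fx] := HD' x Kx.
exists p.1; first by apply/mapP; exists p.
rewrite /fam /= px qx in fx.
have e : (a *: P) *m Dw p.1 *m (b *: Q) = (a * b) *: (P *m Dw p.1 *m Q).
  by rewrite -!scalemxAl -scalemxAr scalerA.
rewrite e GmZ in fx.
set g := Gm (P *m Dw p.1 *m Q) in fx *.
have hc : (Nm.+1%:R)^-1 <= (p.2.+1%:R)^-1 :> R.
  rewrite lef_pV2 ?posrE ?ltr0n // ler_nat ltnS; exact: leq_bigmax_seq.
apply: (@le_trans _ _ ((a * b) ^+ 2 * g * Gm P * Gm Q)).
  by rewrite ler_wpM2r ?Gm_ge0 // ler_wpM2r ?Gm_ge0 // ltW // (le_lt_trans hc fx).
have -> : (a * b) ^+ 2 * g * Gm P * Gm Q = g * (a ^+ 2 * Gm P) * (b ^+ 2 * Gm Q) by ring.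
by rewrite ha hb !mulr1.
Qed.
End S9.

Section S10.
Variable R : realType.
Implicit Types (M P Q : 'M[R]_3).

Lemma powRV' (x r : R) : 0 <= x -> (x^-1) `^ r = (x `^ r)^-1.
Proof. by move=> x0; rewrite -powR_inv1 // -powRrM mulN1r powRN. Qed.

Definition pp (s : R) := if s <= 1 then s else if s <= 2 then 2 - s else 0.
Definition qq (s : R) := if s <= 1 then 2 * s else if s <= 2 then s + 1 else 3%:R * s.

Lemma pp_ge0 s : 0 <= s -> 0 <= pp s.
Proof. by move=> s0; rewrite /pp; case: ifP => // _; case: ifP => // h; rewrite subr_ge0. Qed.
Lemma qq_ge0 s : 0 <= s -> 0 <= qq s.
Proof. by move=> s0; rewrite /qq; case: ifP => _; [|case: ifP => _]; rewrite ?mulr_ge0 ?addr_ge0. Qed.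

Lemma phi_pq s M : \det M = 1 ->
  phi s M = topv (invmx M) `^ pp s * (topv M `^ qq s)^-1.
Proof.
move=> hM; have [b0 bm mt prod _] := sv_det1 hM; rewrite top_inv //.
move: b0 bm mt prod; rewrite /phi /topv /midv /botv.
case: (singvals M) => [[a1 a2] a3] /= b0 bm mt prod.
have a10 : 0 < a1 by lra.
have a1n : a1 != 0 by rewrite lt0r_neq0.
have a3n : a3 != 0 by rewrite lt0r_neq0.
have ea2 : a2 = (a1 * a3)^-1.
  by apply: (mulIf (mulf_neq0 a1n a3n)); rewrite mulVf ?mulf_neq0 // -prod; ring.
rewrite /pp /qq; case: ifP => s1; [|case: ifP => s2].
- have -> : a2 / a1 = a3^-1 * (a1 ^+ 2)^-1.
    by rewrite ea2 invfM; field; rewrite a1n a3n.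
  rewrite powRM ?invr_ge0 ?sqr_ge0 ?ltW // (@powRV' (a1 ^+ 2) s (sqr_ge0 _)).
  by rewrite -(powR_mulrn 2 (ltW a10)) -powRrM.
- have h1 : a3 `^ (s - 1) != 0 by rewrite lt0r_neq0 // powR_gt0.
  have h2 : a1 `^ (s - 1) != 0 by rewrite lt0r_neq0 // powR_gt0.
  have E1 : a3^-1 `^ (2 - s) = a3 `^ (s - 1) / a3.
    rewrite (@powRV' a3 (2 - s)) ?ltW //.
    have -> : 2 - s = 1 - (s - 1) by ring.
    rewrite [in LHS]powRB ?a3n ?implybT // powRr1 ?ltW //.
    by rewrite invf_div.
  have E2 : a1 `^ (s + 1) = a1 ^+ 2 * a1 `^ (s - 1).
    have -> : s + 1 = 2%:R + (s - 1) by ring.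
    by rewrite [in LHS]powRD ?a1n ?implybT // powR_mulrn // ltW.
  have E3 : (a3 / a1) `^ (s - 1) = a3 `^ (s - 1) / a1 `^ (s - 1).
    by rewrite powRM ?invr_ge0 ?ltW // (@powRV' a1 (s - 1)) // ltW.
  rewrite E1 E2 E3 ea2.
  by field; rewrite h2 a1n a3n.
- have -> : a2 * a3 / a1 ^+ 2 = (a1 ^+ 3)^-1 by rewrite ea2; field; rewrite a1n a3n.
  rewrite powRV' ?exprn_ge0 ?ltW // powRr0 mul1r.
  by rewrite -(powR_mulrn 3 (ltW a10)) -powRrM.
Qed.

Lemma pq_qm (p q c K Xu Yu Xw Yw X Y : R) : 0 <= p -> 0 <= q -> 0 < c -> 0 < K ->
  0 < Xu -> 0 < Yu -> 0 < Xw -> 0 < Yw -> 0 < X -> 0 < Y ->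
  c * Xu * Xw <= X -> Y <= K * Yu * Yw ->
  (c `^ p * (K `^ q)^-1) * (Xu `^ p * (Yu `^ q)^-1) * (Xw `^ p * (Yw `^ q)^-1)
    <= X `^ p * (Y `^ q)^-1.
Proof.
move=> p0 q0 c0 K0 xu yu xw yw x y hX hY.
have c0' := ltW c0; have K0' := ltW K0; have xu' := ltW xu; have yu' := ltW yu.
have xw' := ltW xw; have yw' := ltW yw; have x' := ltW x; have y' := ltW y.
have h1 : c `^ p * Xu `^ p * Xw `^ p <= X `^ p.
  rewrite -!powRM ?mulr_ge0 //.
  by apply: (ge0_ler_powR p0); rewrite ?nnegrE ?mulr_ge0.
have h2 : Y `^ q <= K `^ q * Yu `^ q * Yw `^ q.
  rewrite -!powRM ?mulr_ge0 //.
  by apply: (ge0_ler_powR q0); rewrite ?nnegrE ?mulr_ge0.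
have h3 : (K `^ q * Yu `^ q * Yw `^ q)^-1 <= (Y `^ q)^-1.
  by rewrite lef_pV2 // posrE ?mulr_gt0 // powR_gt0.
have -> : (c `^ p * (K `^ q)^-1) * (Xu `^ p * (Yu `^ q)^-1) * (Xw `^ p * (Yw `^ q)^-1)
  = (c `^ p * Xu `^ p * Xw `^ p) * (K `^ q * Yu `^ q * Yw `^ q)^-1 by rewrite !invfM; ring.
apply: ler_pM => //; first by rewrite !mulr_ge0 // powR_ge0.
by rewrite invr_ge0 !mulr_ge0 // powR_ge0.
Qed.

Lemma seq_bound (T : eqType) (F : T -> R) (s : seq T) :
  exists K, 0 < K /\ forall k, k \in s -> F k <= K.
Proof.
elim: s => [|x s [K [K0 HK]]]; first by exists 1.
exists (K + `|F x|); split; first by rewrite ltr_pwDl.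
move=> k; rewrite inE => /orP [/eqP ->|ks].
  by rewrite (le_trans (ler_norm _)) // lerDr ltW.
by rewrite (le_trans (HK _ ks)) // lerDl.
Qed.
End S10.

Unset Implicit Arguments.

Theorem corollary2p3 (R : realType) (I : countType) (A : I -> 'M[R]_3) :
  (forall i, \det (A i) = 1) ->
  irreducible A ->
  forall s : R, 0 <= s -> quasimultiplicative A (phi s).
Proof.
move=> hdet hirr s s0.
pose C := fun i => invmx (A i).
pose Dw := word_mx C.
have [G' [c [c0 Hf]]] := @feng R I Dw (nondeg hdet hirr).
have [Km [Km0 HK]] := seq_bound (fun k => topv (word_mx A k)) [seq rev k | k <- G'].
pose c' := Num.sqrt (c / 3%:R).
have c'0 : 0 < c' by rewrite sqrtr_gt0 divr_gt0.
have c'2 : c' ^+ 2 = c / 3%:R by rewrite sqr_sqrtr // ltW // divr_gt0.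
exists [seq rev k | k <- G'], (c' `^ pp s * (Km `^ qq s)^-1); split.
  by rewrite mulr_gt0 ?invr_gt0 ?powR_gt0.
move=> u w.
set Mu := word_mx A u; set Mw := word_mx A w.
have dMu : \det Mu = 1 by exact: word_det.
have dMw : \det Mw = 1 by exact: word_det.
set P := invmx Mw; set Q := invmx Mu.
have dP : \det P = 1 by rewrite det_inv dMw invr1.
have dQ : \det Q = 1 by rewrite det_inv dMu invr1.
have P0 : P != 0 by apply/eqP => h; move: dP; rewrite h det0 => /eqP; rewrite eq_sym oner_eq0.
have Q0 : Q != 0 by apply/eqP => h; move: dQ; rewrite h det0 => /eqP; rewrite eq_sym oner_eq0.
have [k' k'G hk'] := Hf P Q P0 Q0.
exists (rev k'); first exact: map_f.
set k := rev k'.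
set Mk := word_mx A k.
have dMk : \det Mk = 1 by exact: word_det.
have ek : Dw k' = invmx Mk by rewrite /Mk word_inv // /k revK.
have eM : word_mx A (u ++ k ++ w) = Mu *m Mk *m Mw by rewrite !word_cat mulmxA.
have uMu := det1_unit dMu; have uMk := det1_unit dMk; have uMw := det1_unit dMw.
have eI : invmx (word_mx A (u ++ k ++ w)) = P *m Dw k' *m Q.
  by rewrite eM !invmx_mul ?unitmx_mul ?uMu ?uMk // ek mulmxA.
have dM : \det (word_mx A (u ++ k ++ w)) = 1 by exact: word_det.
have dI : \det (invmx (word_mx A (u ++ k ++ w))) = 1 by rewrite det_inv dM invr1.
rewrite !phi_pq //.
apply: pq_qm; rewrite ?pp_ge0 ?qq_ge0 ?top_gt0 //; last first.
  rewrite eM.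
  have t1 := top_mul (det_mul1 dMu dMk) dMw.
  have t2 := top_mul dMu dMk.
  have t3 : topv Mk <= Km by apply: HK; exact: map_f.
  have gu := top_gt0 dMu; have gw := top_gt0 dMw; have gk := top_gt0 dMk.
  apply: (le_trans t1); rewrite -/Mu -/Mw.
  apply: (@le_trans _ _ (topv Mu * topv Mk * topv Mw)).
    by apply: ler_wpM2r; [exact: ltW|].
  have : topv Mu * topv Mw * topv Mk <= topv Mu * topv Mw * Km.
    by apply: ler_wpM2l => //; rewrite mulr_ge0 // ltW.
  by move=> h; rewrite mulrAC (le_trans h) // mulrC mulrA.
rewrite -/P -/Q.
apply: sq_le; first by rewrite !mulr_ge0 // ltW // top_gt0.
  by rewrite ltW // top_gt0.
have t1 := Gm_ge dP; have t2 := Gm_ge dQ.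
have t3 := Gm_le dI; rewrite eI in t3.
have t12 : topv Q ^+ 2 * topv P ^+ 2 <= Gm Q * Gm P by apply: ler_pM; rewrite ?sqr_ge0.
have t4 : c * (topv Q ^+ 2 * topv P ^+ 2) <= c * (Gm Q * Gm P) by apply: ler_wpM2l => //; exact: ltW.
rewrite !exprMn c'2.
have e : c * (Gm Q * Gm P) = c * Gm P * Gm Q by ring.
rewrite e in t4.
have := le_trans t4 (le_trans hk' t3).
set z := topv Q ^+ 2 * topv P ^+ 2.
move=> h.
have -> : c / 3%:R * topv Q ^+ 2 * topv P ^+ 2 = (c * z) / 3%:R by rewrite /z; ring.
rewrite eI; lra.
Qed.
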